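(* Let $m\geq 3$, let $f$ be a positive smooth function of one real variable, and consider the Egorov space $(\mathbb{R}^m,g_f)$ with $g_f=f(x^m)\sum_{i=1}^{m-2}(dx^i)^2+2dx^{m-1}dx^m$. Let $\widehat{f}$ be a positive smooth function of one real variable and $\widehat{g}_{\widehat{f}}=\widehat{f}(x^m)\sum_{i=1}^{m-2}(dx^i)^2+2dx^{m-1}dx^m$. Then $\widehat{g}_{\widehat{f}}$ is harmonic with respect to $g_f$ if and only if $\widehat{f}'=f'$.
   Context: A pseudo-Riemannian metric $\widehat{h}$ on a manifold $N$ is harmonic with respect to a pseudo-Riemannian metric $h$ if the identity map $I:(N,h)\to(N,\widehat{h})$ is a harmonic map; in local coordinates, $h^{ij}(\widehat{\Gamma}^k_{ij}-\Gamma^k_{ij})=0$ for all $k$, where $\Gamma,\widehat{\Gamma}$ are the Christoffel symbols of $h,\widehat{h}$. *)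

(* Defs.v *)
From mathcomp Require Import all_boot all_order all_algebra.
From mathcomp Require Import all_classical all_reals all_analysis.
Set Implicit Arguments. Unset Strict Implicit. Unset Printing Implicit Defensive.
Import Order.TTheory GRing.Theory Num.Theory.
Import numFieldNormedType.Exports.
Local Open Scope ring_scope.

Section Defs.
Variable R : realType.

Definition smooth1 (f : R -> R) : Prop :=
  forall (n : nat) (t : R), derivable (derive1n n f) t 1.

Definition coord_metric (m : nat) := 'rV[R]_m -> 'M[R]_m.

(* the k-th coordinate x^{k+1} (0-based index k) of a point of R^m *)
Definition xcoord (m : nat) (x : 'rV[R]_m) (k : nat) : R :=
  \sum_(i < m | nat_of_ord i == k) x ord0 i.

Definition pderiv (m : nat) (F : 'rV[R]_m -> R) (l : 'I_m) (x : 'rV[R]_m) : R :=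
  derive F x (delta_mx ord0 l).

Definition christoffel (m : nat) (h : coord_metric m) (x : 'rV[R]_m)
  (k i j : 'I_m) : R :=
  2^-1 * \sum_(l < m) (invmx (h x)) k l *
    (pderiv (fun y => h y j l) i x + pderiv (fun y => h y i l) j x
     - pderiv (fun y => h y i j) l x).

(* hh is harmonic w.r.t. h: the identity (R^m,h) -> (R^m,hh) is harmonic, i.e.
   h^{ij} (hGamma^k_ij - Gamma^k_ij) = 0 for all k, at every point. *)
Definition harmonic_wrt (m : nat) (hh h : coord_metric m) : Prop :=
  forall (x : 'rV[R]_m) (k : 'I_m),
    \sum_(i < m) \sum_(j < m)
      (invmx (h x)) i j * (christoffel hh x k i j - christoffel h x k i j) = 0.

(* Egorov metric g_f = f(x^m) sum_{i=1}^{m-2} (dx^i)^2 + 2 dx^{m-1} dx^m,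
   with 0-based indices: i < m-2 diagonal entries f(x^m), and the
   entries (m-2,m-1), (m-1,m-2) equal to 1. *)
Definition egorov_metric (m : nat) (f : R -> R) : coord_metric m :=
  fun x => \matrix_(i < m, j < m)
    (if (i == j :> nat) && (i < m - 2)%N then f (xcoord x m.-1)
     else if ((i == (m - 2)%N :> nat) && (j == m.-1 :> nat))
          || ((i == m.-1 :> nat) && (j == (m - 2)%N :> nat)) then 1 else 0).

End Defs.

(* Main.v *)
Require Import Defs.
From mathcomp Require Import all_boot all_order all_algebra.
From mathcomp Require Import all_classical all_reals all_analysis.
From mathcomp Require Import zify ring lra.
Import Order.TTheory GRing.Theory Num.Theory.
Import numFieldNormedType.Exports.
Local Open Scope ring_scope.

Section H.
Local Open Scope classical_set_scope.
Variable R : realType.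
Variable n : nat.
Local Notation M := n.+3.

Definition lst : 'I_M := ord_max.
Definition pen : 'I_M := inord n.+1.
Lemma val_pen : nat_of_ord pen = n.+1.
Proof. by rewrite /pen inordK. Qed.

Definition so (i : 'I_M) : 'I_M :=
  if (i < n.+1)%N then i else if (i == n.+1 :> nat) then lst else pen.

Lemma val_so i : nat_of_ord (so i) =
  if (i < n.+1)%N then nat_of_ord i else if (i == n.+1 :> nat) then n.+2 else n.+1.
Proof. by rewrite /so; case: ifP => //; case: ifP => // _; rewrite val_pen. Qed.

Definition Gm (a : R) : 'M[R]_M := \matrix_(i < M, j < M)
    (if (i == j :> nat) && (i < n.+1)%N then a
     else if ((i == n.+1 :> nat) && (j == n.+2 :> nat))
          || ((i == n.+2 :> nat) && (j == n.+1 :> nat)) then 1 else 0).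

Lemma egorovE (f : R -> R) x : @egorov_metric R M f x = Gm (f (xcoord x n.+2)).
Proof. by []. Qed.

Ltac crush := repeat (case: ifP => ?); try lia; try done.

Lemma Gm_row a (i l : 'I_M) :
  Gm a i l = if l == so i then (if (i < n.+1)%N then a else 1) else 0.
Proof.
rewrite mxE -(inj_eq val_inj) /= val_so.
move: (nat_of_ord i) (nat_of_ord l) (ltn_ord i) (ltn_ord l) => p q hp hq.
case: (boolP (p < n.+1)%N) => h1; case: (boolP (p == n.+1)) => h2; crush.
Qed.

Lemma sum_if (F : 'I_M -> R) k : \sum_(l < M) (if l == k then F l else 0) = F k.
Proof. by rewrite -big_mkcond big_pred1_eq. Qed.

Lemma if_mull (b : bool) (c X : R) : (if b then c else 0) * X = if b then c * X else 0.
Proof. by case: b; rewrite ?mul0r. Qed.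

Lemma so_so i : so (so i) = i.
Proof.
apply: val_inj; rewrite /= !val_so.
move: (nat_of_ord i) (ltn_ord i) => p hp.
case: (boolP (p < n.+1)%N) => h1; case: (boolP (p == n.+1)) => h2; crush.
Qed.

Lemma Gm_mul a : a != 0 -> Gm a *m Gm a^-1 = 1%:M.
Proof.
move=> a0; apply/matrixP => i j; rewrite !mxE.
under eq_bigr => l _ do rewrite Gm_row if_mull.
rewrite sum_if Gm_row so_so [j == i]eq_sym.
case: eqP => [->|] /=; last by rewrite mulr0.
rewrite val_so; move: (nat_of_ord j) (ltn_ord j) => p hp.
case: (boolP (p < n.+1)%N) => h1; first by rewrite /= h1 mulfV.
by case: (boolP (p == n.+1)) => h2; rewrite ifF ?mulr1 //; lia.
Qed.

Lemma invGm a : a != 0 -> invmx (Gm a) = Gm a^-1.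
Proof.
move=> a0; have h := @Gm_mul a a0; have [u _] := mulmx1_unit h.
by rewrite -[invmx _]mulmx1 -h mulmxA mulVmx ?mul1mx.
Qed.

Lemma xcoordE (y : 'rV[R]_M) : xcoord y n.+2 = y ord0 lst.
Proof. by rewrite /xcoord (big_pred1 lst) // => i /=; rewrite -(inj_eq val_inj). Qed.

Lemma pderiv_f (f : R -> R) l x :
  pderiv (fun y => f (xcoord y n.+2)) l x =
  if l == lst then derive1 f (xcoord x n.+2) else 0.
Proof.
rewrite /pderiv /derive /derive1 /=.
case: eqP => [->|/eqP ne].
  suff E : (fun h : R => h^-1 *: (f (xcoord (h *: delta_mx ord0 lst + x) n.+2) - f (xcoord x n.+2)))
     = (fun h => h^-1 *: (f (h + xcoord x n.+2) - f (xcoord x n.+2))) by rewrite E.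
  by apply: funext => h; rewrite !xcoordE !mxE !eqxx /= mulr1.
suff E : (fun h : R => h^-1 *: (f (xcoord (h *: delta_mx ord0 l + x) n.+2) - f (xcoord x n.+2)))
     = (fun h : R => (0 : R)) by rewrite E lim_cst.
apply: funext => h.
by rewrite !xcoordE !mxE eqxx /= eq_sym (negbTE ne) mulr0 add0r subrr scaler0.
Qed.

Lemma pderiv_G (f : R -> R) (a b l : 'I_M) x :
  pderiv (fun y => @egorov_metric R M f y a b) l x =
  if ((a == b :> nat) && (a < n.+1)%N) && (l == lst)
  then derive1 f (xcoord x n.+2) else 0.
Proof.
case h: ((a == b :> nat) && (a < n.+1)%N) => /=.
  have -> : (fun y => @egorov_metric R M f y a b) = (fun y => f (xcoord y n.+2)).
    by apply: funext => y; rewrite egorovE mxE h.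
  exact: pderiv_f.
have -> : (fun y => @egorov_metric R M f y a b) = (fun _ => Gm 0 a b).
  by apply: funext => y; rewrite egorovE !mxE h.
exact: derive_cst.
Qed.

Lemma eq_lst (o : 'I_M) : (o == lst) = (nat_of_ord o == n.+2).
Proof. by rewrite -(inj_eq val_inj). Qed.
Lemma eq_pen (o : 'I_M) : (o == pen) = (nat_of_ord o == n.+1).
Proof. by rewrite -(inj_eq val_inj) /= val_pen. Qed.

Lemma gamma_so (f : R -> R) x (k i : 'I_M) : f (xcoord x n.+2) != 0 ->
  christoffel (@egorov_metric R M f) x k i (so i) =
  if (i < n.+1)%N && (k == pen) then - (2^-1 * derive1 f (xcoord x n.+2)) else 0.
Proof.
move=> hf; rewrite /christoffel egorovE invGm //.
under eq_bigr => l _ do rewrite Gm_row if_mull !pderiv_G.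
rewrite sum_if !eq_lst eq_pen !val_so.
move: (derive1 f _) (f _) hf => D a hf.
move: (nat_of_ord i) (ltn_ord i) (nat_of_ord k) (ltn_ord k) => p hp q hq.
case: (boolP (p < n.+1)%N) => h1; case: (boolP (p == n.+1)) => h2;
case: (boolP (q < n.+1)%N) => h3; case: (boolP (q == n.+1)) => h4; crush.
all: try ring.
Qed.

Lemma harm_sum (f fh : R -> R) x (k : 'I_M) :
  f (xcoord x n.+2) != 0 -> fh (xcoord x n.+2) != 0 ->
  \sum_(i < M) \sum_(j < M)
      (invmx (@egorov_metric R M f x)) i j *
      (christoffel (@egorov_metric R M fh) x k i j - christoffel (@egorov_metric R M f) x k i j)
  = (if k == pen then (f (xcoord x n.+2))^-1 *
       - (2^-1 * (derive1 fh (xcoord x n.+2) - derive1 f (xcoord x n.+2))) else 0) *+ n.+1.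
Proof.
move=> hf hfh.
rewrite egorovE invGm //.
under eq_bigr => i _ do under eq_bigr => j _ do rewrite Gm_row if_mull.
under eq_bigr => i _ do rewrite sum_if !gamma_so //.
move: (derive1 f _) (derive1 fh _) (f _) => D Dh a.
set C := (if k == pen then _ else _).
have E : forall i : 'I_M, (if (i < n.+1)%N then a^-1 else 1) *
   ((if (i < n.+1)%N && (k == pen) then - (2^-1 * Dh) else 0) -
    (if (i < n.+1)%N && (k == pen) then - (2^-1 * D) else 0))
   = if (i < n.+1)%N then C else 0.
  move=> i; rewrite /C; case: (i < n.+1)%N; case: (k == pen) => /=; try ring.
under eq_bigr => i _ do rewrite E.
rewrite big_ord_recr big_ord_recr /=.
have -> : (n.+2 < n.+1)%N = false by lia.
rewrite ltnn !addr0.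
under eq_bigr => i _ do rewrite /= ltn_ord.
by rewrite sumr_const card_ord.
Qed.
End H.

Theorem theorem4p1 (R : realType) (m : nat) (hm : (3 <= m)%N)
  (f fh : R -> R)
  (f_smooth : smooth1 f) (f_pos : forall t, 0 < f t)
  (fh_smooth : smooth1 fh) (fh_pos : forall t, 0 < fh t) :
  harmonic_wrt (@egorov_metric R m fh) (@egorov_metric R m f) <->
  (forall t : R, derive1 fh t = derive1 f t).
Proof.
case: m hm => [|[|[|n]]] // _.
split.
- move=> H t; have := H (const_mx t) (pen n).
  rewrite harm_sum ?lt0r_neq0 // eqxx xcoordE mxE.
  move=> /eqP; rewrite mulrn_eq0 /= mulf_eq0 invr_eq0 (negbTE (lt0r_neq0 (f_pos t))) /=.
  rewrite oppr_eq0 mulf_eq0 invr_eq0 pnatr_eq0 /= subr_eq0 => /eqP //.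
- move=> H x k; rewrite harm_sum ?lt0r_neq0 // H subrr mulr0 oppr0 mulr0.
  by case: ifP => _; rewrite mul0rn.
Qed.
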